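(* For every $I\in\{0,1\}^{n\times m}$ there exists $\mathcal{F}\subseteq\mathcal{B}_{\mathcal{E}}(I)$ with $|\mathcal{F}|=\mathrm{rank}_\mathrm{B}(I)$ such that $A_{\mathcal{F}}\circ B_{\mathcal{F}}=I$.
   Context: $(A\circ B)_{ij}=\max_l\min(A_{il},B_{lj})$ is the Boolean product; $\mathrm{rank}_\mathrm{B}(I)$ is the least $k$ with $I=A\circ B$ for some $A\in\{0,1\}^{n\times k}$, $B\in\{0,1\}^{k\times m}$. With $X=\{1,\dots,n\}$, $Y=\{1,\dots,m\}$ and for $C\subseteq X$, $D\subseteq Y$: $C^{\uparrow}=\{j\mid \forall i\in C: I_{ij}=1\}$, $D^{\downarrow}=\{i\mid \forall j\in D: I_{ij}=1\}$; $\mathcal{B}(I)=\{\langle C,D\rangle\mid C^\uparrow=D, D^\downarrow=C\}$ ordered by inclusion of first components; $\gamma(i)=\langle\{i\}^{\uparrow\downarrow},\{i\}^\uparrow\rangle$, $\mu(j)=\langle\{j\}^\downarrow,\{j\}^{\downarrow\uparrow}\rangle$, $\mathcal{I}_{ij}=\{c\in\mathcal{B}(I)\mid\gamma(i)\leq c\leq\mu(j)\}$. $\mathcal{E}(I)_{ij}=1$ iff $\mathcal{I}_{ij}$ is non-empty and minimal w.r.t. $\subseteq$ among the non-empty sets $\mathcal{I}_{i'j'}$, and $\mathcal{B}_{\mathcal{E}}(I)=\bigcup\{\mathcal{I}_{ij}\mid \mathcal{E}(I)_{ij}=1\}$. For $\mathcal{F}=\{\langle C_1,D_1\rangle,\dots,\langle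 C_p,D_p\rangle\}\subseteq\mathcal{B}(I)$, $(A_{\mathcal{F}})_{il}=1$ iff $i\in C_l$ and $(B_{\mathcal{F}})_{lj}=1$ iff $j\in D_l$. *)

(* Defs.v *)
From mathcomp Require Import all_boot matrix.
Set Implicit Arguments. Unset Strict Implicit. Unset Printing Implicit Defensive.
Local Open Scope ring_scope.

Definition bprod n k m (A : 'M[bool]_(n, k)) (B : 'M[bool]_(k, m)) : 'M[bool]_(n, m) :=
  \matrix_(i < n, j < m) [exists l : 'I_k, A i l && B l j].

Definition bfact n m (I : 'M[bool]_(n, m)) (k : nat) : bool :=
  [exists A : 'M[bool]_(n, k), exists B : 'M[bool]_(k, m), bprod A B == I].

Lemma bfact_n n m (I : 'M[bool]_(n, m)) : exists k, bfact I k.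
Proof.
exists n; apply/existsP; exists (\matrix_(i < n, l < n) (i == l)).
apply/existsP; exists I; apply/eqP/matrixP => i j; rewrite !mxE.
apply/existsP/idP => [[l /andP[]]|H]; first by rewrite mxE => /eqP ->.
by exists i; rewrite mxE eqxx H.
Qed.

Definition brank n m (I : 'M[bool]_(n, m)) : nat := ex_minn (bfact_n I).

Section Concepts.
Variables (n m : nat) (I : 'M[bool]_(n, m)).

Definition up (C : {set 'I_n}) : {set 'I_m} := [set j | [forall i in C, I i j]].
Definition down (D : {set 'I_m}) : {set 'I_n} := [set i | [forall j in D, I i j]].

Definition concept := ({set 'I_n} * {set 'I_m})%type.

Definition concepts : {set concept} :=
  [set c : concept | (up c.1 == c.2) && (down c.2 == c.1)].

Definition cle (c d : concept) : bool := c.1 \subset d.1.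

Definition gam (i : 'I_n) : concept := (down (up [set i]), up [set i]).
Definition mu (j : 'I_m) : concept := (down [set j], up (down [set j])).

Definition Iint (i : 'I_n) (j : 'I_m) : {set concept} :=
  [set c in concepts | cle (gam i) c && cle c (mu j)].

Definition Emat : 'M[bool]_(n, m) :=
  \matrix_(i < n, j < m)
    ((Iint i j != set0) &&
     [forall i' : 'I_n, forall j' : 'I_m,
        (Iint i' j' != set0) ==> ~~ (Iint i' j' \proper Iint i j)]).

Definition BE : {set concept} := \bigcup_(ij : 'I_n * 'I_m | Emat ij.1 ij.2) Iint ij.1 ij.2.

Definition AF (F : {set concept}) : 'M[bool]_(n, #|F|) :=
  \matrix_(i < n, l < #|F|) (i \in (enum_val l).1).
Definition BF (F : {set concept}) : 'M[bool]_(#|F|, m) :=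
  \matrix_(l < #|F|, j < m) (j \in (enum_val l).2).

End Concepts.

(* Main.v *)
Require Import Defs.
From mathcomp Require Import all_boot matrix.

Set Implicit Arguments. Unset Strict Implicit.
Section Help.
Variables (n m : nat) (I : 'M[bool]_(n, m)).

Lemma sub_down_up (C : {set 'I_n}) : C \subset down I (up I C).
Proof.
apply/subsetP => i iC; rewrite inE; apply/forall_inP => j; rewrite inE.
by move/forall_inP; apply.
Qed.

Lemma up_anti (C C' : {set 'I_n}) : C \subset C' -> up I C' \subset up I C.
Proof.
move=> /subsetP s; apply/subsetP => j; rewrite !inE => /forall_inP H.
by apply/forall_inP => i /s; apply: H.
Qed.

Lemma down_anti (D D' : {set 'I_m}) : D \subset D' -> down I D' \subset down I D.
Proof.
move=> /subsetP s; apply/subsetP => j; rewrite !inE => /forall_inP H.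
by apply/forall_inP => i /s; apply: H.
Qed.

Lemma sub_down1 (C : {set 'I_n}) j : (C \subset down I [set j]) = (j \in up I C).
Proof.
rewrite inE; apply/subsetP/forall_inP => H i /H.
  by rewrite inE => /forall_inP; apply; rewrite inE.
by move=> Hi; rewrite inE; apply/forall_inP => j'; rewrite inE => /eqP ->.
Qed.

Lemma concept_in (c : concept n m) (i : 'I_n) (j : 'I_m) :
  c \in concepts I -> i \in c.1 -> j \in c.2 -> I i j.
Proof.
rewrite inE => /andP[/eqP <- _] iC; rewrite inE => /forall_inP; apply; done.
Qed.

Lemma IintE i j (c : concept n m) :
  (c \in Iint I i j) = [&& c \in concepts I, i \in c.1 & j \in c.2].
Proof.
rewrite /Iint inE /cle /gam /mu /=.
case cC: (c \in concepts I) => //=.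
move: (cC); rewrite inE => /andP[/eqP e2 /eqP e1].
rewrite sub_down1 e2; congr (_ && _).
apply/idP/idP => H.
  by apply: (subsetP H); apply: (subsetP (sub_down_up _)); rewrite inE.
rewrite -e1 -e2; apply: down_anti; apply: up_anti; by rewrite sub1set.
Qed.

Lemma gam_concept i : gam I i \in concepts I.
Proof.
rewrite inE /gam /=; rewrite eqxx andbT eqEsubset; apply/andP; split.
  by apply: up_anti; apply: sub_down_up.
apply/subsetP => j jD; rewrite inE; apply/forall_inP => i'; rewrite inE.
by move/forall_inP; apply.
Qed.

Lemma Iint_nonempty i j : I i j -> Iint I i j != set0.
Proof.
move=> Hij; apply/set0Pn; exists (gam I i); rewrite IintE gam_concept /=.
rewrite (subsetP (sub_down_up _)) ?inE ?eqxx //=.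
by apply/forall_inP => i'; rewrite inE => /eqP ->.
Qed.

Lemma essential_below i j : Iint I i j != set0 ->
  exists i' j', Emat I i' j' /\ Iint I i' j' \subset Iint I i j.
Proof.
move: {2}#|Iint I i j| (leqnn #|Iint I i j|) => k.
elim: k i j => [|k IH] i j.
  by rewrite leqn0 cards_eq0 => /eqP ->; rewrite eqxx.
move=> Hk Hne.
case E: (Emat I i j); first by exists i, j; split.
move: E; rewrite /Emat mxE Hne /= => /negbT/forallPn[i' /forallPn[j' ]].
rewrite negb_imply negbK => /andP[ne' pr].
have [i'' [j'' [E'' S'']]] : exists i'' j'', Emat I i'' j'' /\ Iint I i'' j'' \subset Iint I i' j'.
  apply: IH ne'. by rewrite -ltnS (leq_trans (proper_card pr)).
exists i'', j''; split => //; apply: subset_trans S'' (proper_sub pr).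
Qed.

Lemma closure_concept (C : {set 'I_n}) : (down I (up I C), up I C) \in concepts I.
Proof.
rewrite inE /=; rewrite eqxx andbT eqEsubset; apply/andP; split.
  by apply: up_anti; apply: sub_down_up.
apply/subsetP => j jD; rewrite inE; apply/forall_inP => i'; rewrite inE.
by move/forall_inP; apply.
Qed.

Lemma bprod_cover (F : {set concept n m}) :
  F \subset concepts I ->
  (forall i j, I i j -> exists2 c, c \in F & (i \in c.1) && (j \in c.2)) ->
  bprod (AF F) (BF F) = I.
Proof.
move=> /subsetP FC cov; apply/matrixP => i j; rewrite !mxE.
apply/existsP/idP.
  move=> [l]; rewrite !mxE => /andP[H1 H2].
  by move: (FC _ (enum_valP l)) => /concept_in; apply.
move=> /cov [c cF /andP[H1 H2]].
exists (enum_rank_in cF c); rewrite !mxE enum_rankK_in //.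
by rewrite H1 H2.
Qed.

End Help.

Theorem theorem5 (n m : nat) (I : 'M[bool]_(n, m)) :
  exists F : {set concept n m},
    [/\ F \subset BE I, #|F| = brank I & bprod (AF F) (BF F) = I].
Proof.
rewrite /brank; case: ex_minnP => k /existsP[A /existsP[B /eqP AB]] kmin.
pose C (l : 'I_k) := [set i | A i l].
pose F0 := [set (down I (up I (C l)), up I (C l)) | l : 'I_k].
pose F := F0 :&: BE I.
have FC : F \subset concepts I.
  apply/subsetP => c; rewrite inE => /andP[/imsetP[l _ ->] _].
  exact: closure_concept.
have cov : forall i j, I i j -> exists2 c, c \in F & (i \in c.1) && (j \in c.2).
  move=> i j /Iint_nonempty /essential_below [i' [j' [E S]]].
  have : Iint I i' j' != set0 by move: E; rewrite mxE => /andP[].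
  case/set0Pn => c; rewrite IintE => /and3P[cC H1 H2].
  have := concept_in cC H1 H2; rewrite -AB mxE => /existsP[l /andP[Ail Blj]].
  set c0 := (down I (up I (C l)), up I (C l)).
  have c0I : c0 \in Iint I i' j'.
    rewrite IintE closure_concept /=.
    rewrite (subsetP (sub_down_up I _)) ?inE //=.
    apply/forall_inP => i''; rewrite inE => Ail'.
    by rewrite -AB mxE; apply/existsP; exists l; rewrite Ail' Blj.
  exists c0.
    rewrite inE; apply/andP; split; first by apply/imsetP; exists l.
    rewrite /BE; apply/bigcupP; exists (i', j') => //.
  by move: (subsetP S _ c0I); rewrite IintE => /and3P[_ -> ->].
have FBE : F \subset BE I by apply: subsetIr.
exists F; split => //; last exact: bprod_cover.
apply/eqP; rewrite eqn_leq; apply/andP; split.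
  apply: leq_trans (subset_leq_card (subsetIl _ _)) _.
  by apply: leq_trans (leq_imset_card _ _) _; rewrite card_ord.
apply: kmin; apply/existsP; exists (AF F); apply/existsP; exists (BF F).
by apply/eqP; apply: bprod_cover.
Qed.
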